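(* Let $G=(V,E)$ be a finite simple graph and let $T\geq1$ be an integer. For each zero forcing set $C$ that is the initial set of a zero forcing game in $\mathcal{Z}(G,T)$, there is a feasible solution $(s,x,y,z)$ of the Infection Model $\mathrm{IM}(G,T)$ such that $|C|=\sum_{v\in V}s_v$ and $z=\mathrm{pt}(G,C)\leq T$.
   Context: Zero forcing: $n=|V|$, $N(u)$ is the neighborhood of $u$. Under the standard color change rule, a filled vertex $u$ can force a non-filled vertex $v$ if $v$ is the only non-filled neighbor of $u$. A zero forcing game on $G$ with initial set $C\subseteq V$ consists of sets $C^{(0)}=C^{[0]}=C$, sets $C^{(t)}$ (vertices forced at time step $t$) with $C^{[t]}=C^{[t-1]}\cup C^{(t)}$ for $t\geq1$, and a collection $\phi(C)$ of forces $u\to v$, such that every vertex lies in exactly one set $C^{(t)}$, and each $v\in C^{(t)}$ with $t\geq 1$ is forced by exactly one neighbor $u$ (recorded as $u\to v$ in $\phi(C)$) such that $u$ and all neighbors of $u$ other than $v$ lie in $C^{[t-1]}$. The closure of $C$ is the set of filled vertices once no more forces are possible; $C$ is a zero forcing set if its closure is $V$. The propagation time $\mathrm{pt}(G,C)$ is the smallest $t^*$ with $C^{[t^*]}=V$ when at each time step all possible forces are applied simultaneously (i.e. $C^{(t)}$ is the set of all $v\notin C^{[t-1]}$ for which some $u\in C^{[t-1]}$ has $v$ as its unique neighbor outside $C^{[t-1]}$), and $\mathrm{pt}(G,C)=\infty$ if $C$ is not a zero forcing set. $\mathcal{Z}(G,T)$ denotes the family of all zero forcing games on $G$ whose initial set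 is a zero forcing set and which use at most $T$ time steps. Infection Model: let $A$ be the set of arcs containing both $(u,v)$ and $(v,u)$ for each edge $\{u,v\}\in E$. The model $\mathrm{IM}(G,T)$ has variables $s_v\in\{0,1\}$ and $x_v\in\{0,1,\dots,T\}$ for $v\in V$, $y_a\in\{0,1\}$ for $a\in A$, and $z\in\{0,1,\dots,T\}$, subject to: (i) $s_v+\sum_{a=(u,v)\in A}y_a=1$ for all $v\in V$; (ii) $x_u-x_v+(T+1)y_a\leq T$ for all $a=(u,v)\in A$; (iii) $x_w-x_v+(T+1)y_a\leq T$ for all $a=(u,v)\in A$ and $w\in N(u)\setminus\{v\}$; (iv) $x_v-z\leq 0$ for all $v\in V$. A feasible solution is one satisfying all these constraints. *)

(* Defs.v *)
From mathcomp Require Import all_boot all_order all_algebra.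
Set Implicit Arguments. Unset Strict Implicit. Unset Printing Implicit Defensive.
Import Order.TTheory GRing.Theory Num.Theory.

Definition simple_graph (V : finType) (e : rel V) : Prop :=
  symmetric e /\ irreflexive e.

Definition force_step (V : finType) (e : rel V) (S : {set V}) : {set V} :=
  S :|: [set v | (v \notin S) &&
                 [exists u, [&& u \in S, e u v &
                   [forall w, (e u w && (w != v)) ==> (w \in S)]]]].

Definition filled_at (V : finType) (e : rel V) (C : {set V}) (t : nat) : {set V} :=
  iter t (force_step e) C.

Definition zero_forcing_set (V : finType) (e : rel V) (C : {set V}) : Prop :=
  exists t, filled_at e C t = setT.

(* pt(G,C) = t  (t is the least time with C^{[t]} = V); if C is not a zero
   forcing set, no finite t satisfies this (pt = infinity). *)
Definition is_prop_time (V : finType) (e : rel V) (C : {set V}) (t : nat) : Prop :=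
  filled_at e C t = setT /\ forall t', t' < t -> filled_at e C t' != setT.

(* A zero forcing game with initial set C using at most T time steps.
   time v = the unique t with v \in C^{(t)}; forcer v = the u with u -> v
   in phi(C) (meaningful when time v >= 1).  C^{[t-1]} = {w | time w < t}. *)
Definition zf_game (V : finType) (e : rel V) (C : {set V}) (T : nat)
    (time : V -> nat) (forcer : V -> V) : Prop :=
  (forall v, (v \in C) = (time v == 0%N)) /\
  (forall v, time v <= T) /\
  (forall v, 0 < time v ->
     [/\ e (forcer v) v, time (forcer v) < time v &
         forall w, e (forcer v) w -> w != v -> time w < time v]).

Definition in_ZGT (V : finType) (e : rel V) (T : nat) (C : {set V}) : Prop :=
  zero_forcing_set e C /\ exists time forcer, zf_game e C T time forcer.

Local Open Scope ring_scope.

(* Feasibility for IM(G,T).  Arcs A = {(u,v) | e u v}; y is given on all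
   pairs but only its values on arcs are constrained/used. *)
Definition IM_feasible (V : finType) (e : rel V) (T : nat)
    (s : V -> int) (x : V -> int) (y : V -> V -> int) (z : int) : Prop :=
  (forall v, s v = 0 \/ s v = 1) /\
  (forall v, 0 <= x v <= T%:Z) /\
  (forall u v, e u v -> y u v = 0 \/ y u v = 1) /\
  (0 <= z <= T%:Z) /\
  (forall v, s v + \sum_(u | e u v) y u v = 1) /\
  (forall u v, e u v -> x u - x v + (T%:Z + 1) * y u v <= T%:Z) /\
  (forall u v w, e u v -> e u w -> w != v ->
     x w - x v + (T%:Z + 1) * y u v <= T%:Z) /\
  (forall v, x v - z <= 0).

(* Main.v *)
Require Import Defs.
From mathcomp Require Import all_boot all_order all_algebra.
From mathcomp Require Import zify.
Import Order.TTheory GRing.Theory Num.Theory.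
Set Implicit Arguments. Unset Strict Implicit.
Local Open Scope ring_scope.

Lemma filled_S (V : finType) (e : rel V) C t :
  filled_at e C t.+1 = force_step e (filled_at e C t).
Proof. by rewrite /filled_at iterS. Qed.

Set Warnings "-all".
Lemma filled_mono (V : finType) (e : rel V) C t t' : (t <= t')%N ->
  filled_at e C t \subset filled_at e C t'.
Proof.
move=> /subnK <-; elim: (t' - t)%N => [|k IH] //=.
apply: subset_trans IH _; exact: subsetUl.
Qed.

Lemma game_fill (V : finType) (e : rel V) C T time forcer :
  zf_game e C T time forcer -> forall t v, (time v <= t)%N -> v \in filled_at e C t.
Proof.
move=> [h0 [_ hf]]; elim=> [|t IH] v.
  by rewrite leqn0 -h0.
rewrite leq_eqVlt => /orP [/eqP ht|]; last first.
  by rewrite ltnS => /IH; apply/subsetP/filled_mono.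
have := hf v; rewrite ht => /(_ isT) [euv ltu hw].
rewrite filled_S /force_step inE.
case: (boolP (v \in filled_at e C t)) => //= vn.
rewrite inE vn /=; apply/existsP; exists (forcer v).
rewrite euv (IH _ ltu) /=.
apply/forallP => w; apply/implyP => /andP [ew nw].
by apply: IH; apply: hw.
Qed.

Lemma tm_exists (V : finType) (e : rel V) C N : filled_at e C N = setT ->
  exists tm : V -> nat, forall v t, (v \in filled_at e C t) = (tm v <= t)%N.
Proof.
move=> hN.
have hx : forall v, exists t, v \in filled_at e C t by move=> v; exists N; rewrite hN inE.
exists (fun v => ex_minn (hx v)) => v t.
case: ex_minnP => m hm hmin.
apply/idP/idP; first exact: hmin.
move=> lm; exact: (subsetP (filled_mono e C lm) _ hm).
Qed.

Theorem theorem3p2 (V : finType) (e : rel V) (T : nat) (C : {set V}) :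
  simple_graph e -> (1 <= T)%N -> in_ZGT e T C ->
  exists (s x : V -> int) (y : V -> V -> int) (z : int),
    [/\ IM_feasible e T s x y z,
        (#|C|)%:Z = \sum_(v : V) s v &
        exists pt : nat, [/\ is_prop_time e C pt, z = pt%:Z & (pt <= T)%N]].
Proof.
move=> _ T1 [_ [time [forcer hg]]].
have hT : filled_at e C T = setT.
  apply/setP => v; rewrite inE; apply: (game_fill hg); by case: hg => _ [].
have hex : exists t, filled_at e C t == setT by exists T; rewrite hT.
case: (ex_minnP hex) => pt /eqP hpt hptmin.
have ptT : (pt <= T)%N by apply: hptmin; rewrite hT.
have [tm htm] := tm_exists hpt.
have tmpt : forall v, (tm v <= pt)%N by move=> v; rewrite -htm hpt inE.
have hC : forall v, (v \in C) = (tm v == 0%N) by move=> v; rewrite -leqn0 -htm.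
pose P v u := [&& u \in filled_at e C (tm v).-1, e u v &
                   [forall w, (e u w && (w != v)) ==> (w \in filled_at e C (tm v).-1)]].
have hP : forall v, v \notin C -> exists u, P v u.
  move=> v; rewrite hC => nz.
  have : v \in filled_at e C (tm v) by rewrite htm.
  rewrite -(prednK (n:=tm v)) ?lt0n // filled_S /force_step inE.
  rewrite htm -ltnS prednK ?lt0n // ltnn /= inE htm -ltnS prednK ?lt0n // ltnn /=.
  by case/existsP => u hu; exists u.
pose f v := odflt v [pick u | P v u].
have hf : forall v, v \notin C -> P v (f v).
  move=> v /hP [u hu]; rewrite /f; case: pickP => //= /(_ u); by rewrite hu.
exists (fun v => ((v \in C) : nat)%:Z), (fun v => (tm v)%:Z),
  (fun u v => (((v \notin C) && (u == f v)) : nat)%:Z), pt%:Z.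
split; last first.
- exists pt; split => //; split => // t' lt'; apply/negP => /eqP h.
  by have := hptmin t'; rewrite h eqxx => /(_ isT); rewrite leqNgt lt'.
- rewrite -sum1_card big_mkcond /=.
  rewrite (big_morph Posz PoszD (erefl _)); apply: eq_bigr => v _; by case: (v \in C).
split.
- by move=> v; case: (v \in C); [right|left].
split.
- move=> v; apply/andP; split => //; have := tmpt v; lia.
split.
- by move=> u v _; case: (_ && _); [right|left].
split.
- apply/andP; split => //; lia.
split.
- move=> v; case: (boolP (v \in C)) => vC /=.
  + rewrite big1 ?addr0 // => u _; by rewrite vC.
  + have /and3P [_ ev _] := hf v vC.
    rewrite (bigD1 (f v)) //= eqxx big1 ?addr0 // => u /andP [_ nu].
    by rewrite (negbTE nu).
split.
- move=> u v euv; case: (boolP (v \in C)) => vC /=.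
    have := tmpt u; have := tmpt v; lia.
  case: (eqVneq u (f v)) => [->|]; last by have := tmpt u; have := tmpt v; lia.
  have /and3P [hu _ _] := hf v vC; move: hu; rewrite htm.
  move: vC; rewrite hC; have := tmpt u; have := tmpt v; lia.
split.
- move=> u v w euv euw wv; case: (boolP (v \in C)) => vC /=.
    have := tmpt w; have := tmpt v; lia.
  case: (eqVneq u (f v)) => [ufv|]; last by have := tmpt w; have := tmpt v; lia.
  have /and3P [_ _ /forallP /(_ w)] := hf v vC.
  rewrite -ufv euw wv /= htm.
  move: vC; rewrite hC; have := tmpt w; have := tmpt v; lia.
- move=> v; have := tmpt v; lia.
Qed.
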